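(* Let $\Omega\subset\mathbb{R}^2$ be open, $\lambda>0$, and let $u\in L^2(\Omega)$ satisfy $-\Delta u=\lambda u$ in $\Omega$. Let $\mathbf{x}_0\in\Omega$, $h>0$, $\alpha\in(0,1)$, and let $\mathbf{e}^-,\mathbf{e}^+$ be unit vectors with angle $\alpha\pi$ from $\mathbf{e}^-$ to $\mathbf{e}^+$; put $\Gamma^\pm=\{\mathbf{x}_0+t\mathbf{e}^\pm:0\le t\le h\}\subset\Omega$. Suppose $\Gamma^+$ is a singular line of $u$ ($\partial_\nu u=0$ on $\Gamma^+$, $\nu$ a unit normal to $\Gamma^+$) and $\Gamma^-$ is a nodal line of $u$ ($u=0$ on $\Gamma^-$). Let $n\in\mathbb{N}$, $n\ge2$. If $\alpha\neq\frac{2q+1}{2p}$ for all integers $p,q$ with $1\le p\le n-1$ and $0\le q\le p-1$, then $u$ vanishes up to the order $n$ at $\mathbf{x}_0$, i.e. all partial derivatives of $u$ of order at most $n-1$ vanish at $\mathbf{x}_0$.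
   Context: No boundary condition is imposed on $\partial\Omega$; $u$ is real-analytic in $\Omega$. ''Vanishes up to order $n$'' means every homogeneous term of degree $<n$ in the Taylor expansion of $u$ at $\mathbf{x}_0$ vanishes. *)

(* Defs.v *)
From HB Require Import structures.
From mathcomp Require Import all_boot all_order all_algebra.
From mathcomp Require Import all_classical all_reals all_analysis.
Set Implicit Arguments.
Unset Strict Implicit.
Unset Printing Implicit Defensive.
Import Order.TTheory GRing.Theory Num.Theory.
Import numFieldNormedType.Exports.
Local Open Scope classical_set_scope.
Local Open Scope ring_scope.

Section Defs.
Variable R : realType.

Definition dx (f : R * R -> R) : R * R -> R :=
  fun p => derive1 (fun t => f (t, p.2)) p.1.
Definition dy (f : R * R -> R) : R * R -> R :=
  fun p => derive1 (fun t => f (p.1, t)) p.2.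

(* iterated partial derivative: a word w of directions
   (false = d/dx, true = d/dy); its order is size w *)
Definition dpartial (w : seq bool) (f : R * R -> R) : R * R -> R :=
  foldr (fun b g => if b then dy g else dx g) f w.

Definition smooth_on (O : set (R * R)) (f : R * R -> R) : Prop :=
  forall (w : seq bool) (p : R * R), O p -> differentiable (dpartial w f) p.

Definition real_analytic_on (O : set (R * R)) (f : R * R -> R) : Prop :=
  forall p0 : R * R, O p0 ->
    exists (r : R) (a : nat -> nat -> R), 0 < r /\
      forall p : R * R, `|p.1 - p0.1| < r -> `|p.2 - p0.2| < r ->
        (exists M : R, forall N : nat,
           \sum_(i < N) \sum_(j < N)
              `|a i j| * `|p.1 - p0.1| ^+ i * `|p.2 - p0.2| ^+ j <= M) /\
        ((fun N : nat => \sum_(i < N) \sum_(j < N)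
              a i j * (p.1 - p0.1) ^+ i * (p.2 - p0.2) ^+ j) @ \oo
           --> f p).

Definition laplacian (f : R * R -> R) : R * R -> R :=
  fun p => dx (dx f) p + dy (dy f) p.

Definition segment (x0 e : R * R) (h : R) : set (R * R) :=
  [set p | exists2 t : R, 0 <= t <= h & p = (x0.1 + t * e.1, x0.2 + t * e.2)].

Definition rotate (theta : R) (e : R * R) : R * R :=
  (cos theta * e.1 - sin theta * e.2, sin theta * e.1 + cos theta * e.2).

Definition vanishes_up_to_order (u : R * R -> R) (n : nat) (x0 : R * R) :=
  forall w : seq bool, (size w < n)%N -> dpartial w u x0 = 0.

End Defs.

(* Main.v *)
Require Import Defs.
From HB Require Import structures.
From mathcomp Require Import all_boot all_order all_algebra.
From mathcomp Require Import all_classical all_reals all_analysis.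
Import Order.TTheory GRing.Theory Num.Theory.
Import numFieldNormedType.Exports.
Local Open Scope classical_set_scope.
Local Open Scope ring_scope.
From mathcomp Require Import ring lra zify.

Section Alg.
Variable R : realType.

Fixpoint T (vs : seq (R * R)) (c : seq bool -> R) : R :=
  match vs with
  | [::] => c [::]
  | v :: vs' => v.1 * T vs' (fun w => c (false :: w)) + v.2 * T vs' (fun w => c (true :: w))
  end.

Lemma T_ext vs c c' : (forall w, size w = size vs -> c w = c' w) -> T vs c = T vs c'.
Proof.
elim: vs c c' => [|v vs IH] c c' H /=; first exact: H.
rewrite (IH (fun w => c (false :: w)) (fun w => c' (false :: w))); last by move=> w hw; apply: (H (false :: w)); rewrite /= hw.
by rewrite (IH (fun w => c (true :: w)) (fun w => c' (true :: w))) // => w hw; apply: (H (true :: w)); rewrite /= hw.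
Qed.

Lemma T_lin_c vs c c' a b : T vs (fun w => a * c w + b * c' w) = a * T vs c + b * T vs c'.
Proof.
elim: vs c c' => [|v vs IH] c c' //=.
rewrite (IH (fun w => c (false :: w))) (IH (fun w => c (true :: w))); ring.
Qed.

Lemma T_zero vs : T vs (fun _ => 0) = 0.
Proof.
elim: vs => [|v vs IH] //=; rewrite IH; ring.
Qed.

Lemma T_cat vs ws c : T (vs ++ ws) c = T vs (fun w => T ws (fun w' => c (w ++ w'))).
Proof.
elim: vs c => [|v vs IH] c //=; by rewrite !IH.
Qed.

Definition basis (b : bool) : R * R := if b then (0, 1) else (1, 0).

Lemma T_basis w c : T (map basis w) c = c w.
Proof.
elim: w c => [|b w IH] c //=; case: b => /=; rewrite !IH; ring.
Qed.

Lemma T_lin A B v v1 v2 a b c : v = (a * v1.1 + b * v2.1, a * v1.2 + b * v2.2) ->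
  T (A ++ v :: B) c = a * T (A ++ v1 :: B) c + b * T (A ++ v2 :: B) c.
Proof.
move=> ->; elim: A c => [|x A IH] c /=; first ring.
rewrite (IH (fun w => c (false :: w))) (IH (fun w => c (true :: w))); ring.
Qed.

Definition csym (c : seq bool -> R) :=
  forall p b b' w, c (p ++ b :: b' :: w) = c (p ++ b' :: b :: w).

Lemma T_swap A v v' D c : csym c ->
  T (A ++ v :: v' :: D) c = T (A ++ v' :: v :: D) c.
Proof.
elim: A c => [|x A IH] c hc /=; last first.
  rewrite (IH (fun w => c (false :: w))) ?(IH (fun w => c (true :: w))) //.
    by move=> p b b' w; apply: (hc (true :: p)).
  by move=> p b b' w; apply: (hc (false :: p)).
have E : (fun w => c [:: false, true & w]) = (fun w => c [:: true, false & w]).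
  by apply: funext => w; apply: (hc [::]).
rewrite E; ring.
Qed.

Lemma T_move A v B C c : csym c ->
  T (A ++ v :: B ++ C) c = T (A ++ B ++ v :: C) c.
Proof.
move=> hc; elim: B A => [|b B IH] A //=.
by rewrite T_swap // -cat_rcons IH cat_rcons.
Qed.


Section Core.
Variables (c : seq bool -> R) (N : nat) (em : R * R) (th : R).
Hypothesis hc : csym c.
Hypothesis hN : (1 <= N)%N.
Hypothesis he : em.1 ^+ 2 + em.2 ^+ 2 = 1.
Hypothesis hharm : forall w, (2 <= N)%N -> size w = (N - 2)%N ->
  c (w ++ [:: false; false]) + c (w ++ [:: true; true]) = 0.
Hypothesis hnod : T (nseq N em) c = 0.
Let ep := rotate th em.
Hypothesis hsing : T (nseq N.-1 ep ++ [:: (- ep.2, ep.1)]) c = 0.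
Hypothesis hcos : cos (N%:R * th) != 0.

Let nm : R * R := (- em.2, em.1).
Let S k := T (nseq k nm ++ nseq (N - k) em) c.

Lemma harm_rot V : (2 <= N)%N -> size V = (N - 2)%N ->
  T (V ++ [:: em; em]) c + T (V ++ [:: nm; nm]) c = 0.
Proof.
move=> h2 hV; rewrite !T_cat.
rewrite -[LHS]/(_ + _) -[X in X + _]mul1r -[X in _ + X]mul1r -T_lin_c.
rewrite -(T_zero V); apply: T_ext => w hw /=.
have H := hharm w h2 (etrans hw hV).
transitivity ((em.1 ^+ 2 + em.2 ^+ 2) * (c (w ++ [:: false; false]) + c (w ++ [:: true; true]))).
  rewrite /nm /=; ring.
by rewrite H mulr0.
Qed.

Lemma S_step k : (k + 2 <= N)%N -> S (k + 2) = - S k.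
Proof.
move=> hk; apply/eqP; rewrite -subr_eq0 opprK; apply/eqP.
rewrite /S.
have -> : (N - k = (N - (k + 2)) + 2)%N by lia.
set j := (N - (k + 2))%N.
have -> : nseq (j + 2) em = nseq j em ++ [:: em; em] by rewrite nseqD.
have -> : nseq (k + 2) nm = nm :: nm :: nseq k nm by rewrite addnC.
have -> : T (nm :: nm :: nseq k nm ++ nseq j em) c =
          T ((nseq k nm ++ nseq j em) ++ [:: nm; nm]) c.
  have E1 := T_move [:: nm] nm (nseq k nm ++ nseq j em) [::] c hc.
  have E2 := T_move [::] nm (nseq k nm ++ nseq j em) [:: nm] c hc.
  rewrite cats0 in E1; rewrite ?cat1s ?cat0s in E1 E2.
  by rewrite E1 E2 -catA.
rewrite addrC catA harm_rot //; first lia.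
by rewrite size_cat !size_nseq /j; lia.
Qed.

Lemma ep_lin : ep = (cos th * em.1 + sin th * nm.1, cos th * em.2 + sin th * nm.2).
Proof. rewrite /ep /rotate /nm /=; congr (_, _); ring. Qed.

Lemma F m k : (m + k <= N)%N ->
  T (nseq m ep ++ nseq k nm ++ nseq (N - m - k) em) c =
  cos (m%:R * th) * S k + sin (m%:R * th) * S k.+1.
Proof.
elim: m k => [|m IH] k hmk.
  by rewrite mul0r cos0 sin0 mul1r mul0r addr0 /S subn0.
have -> : nseq m.+1 ep ++ nseq k nm ++ nseq (N - m.+1 - k) em =
   [::] ++ ep :: (nseq m ep ++ nseq k nm ++ nseq (N - m.+1 - k) em) by [].
rewrite (T_lin _ _ _ _ _ _ _ _ ep_lin).
have E1 := T_move [::] em (nseq m ep ++ nseq k nm) (nseq (N - m.+1 - k) em) c hc.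
have E2 := T_move [::] nm (nseq m ep) (nseq k nm ++ nseq (N - m.+1 - k) em) c hc.
rewrite !cat0s -!catA in E1 E2.
rewrite !cat0s E1 E2.
have -> : em :: nseq (N - m.+1 - k) em = nseq (N - m - k) em.
  by have -> : (N - m - k = (N - m.+1 - k).+1)%N by lia.
rewrite -[nm :: nseq k nm ++ _]/(nseq k.+1 nm ++ _).
have -> : (N - m.+1 - k = N - m - k.+1)%N by lia.
rewrite IH; last lia.
rewrite IH; last lia.
have -> : m.+1%:R * th = m%:R * th + th by rewrite -addn1 natrD mulrDl mul1r.
rewrite cosD sinD.
clear E1 E2; case: m IH hmk => [|m] IH hmk.
  rewrite mul0r sin0 cos0; ring.
have -> : S k.+2 = - S k by rewrite -addn2 S_step //; lia.
ring.
Qed.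

Lemma S0 : S 0 = 0.
Proof. by rewrite /S subn0. Qed.

Lemma S1 : S 1 = 0.
Proof.
have nu_lin : (- ep.2, ep.1) = ((- sin th) * em.1 + cos th * nm.1, (- sin th) * em.2 + cos th * nm.2).
  rewrite /ep /rotate /nm /=; congr (_, _); ring.
move: hsing; rewrite -[nseq N.-1 ep ++ _]/(nseq N.-1 ep ++ _ :: [::]) (T_lin _ _ _ _ _ _ _ _ nu_lin).
have A1 : T (nseq N.-1 ep ++ [:: em]) c = cos (N.-1%:R * th) * S 0 + sin (N.-1%:R * th) * S 1.
  rewrite -F; last lia.
  by have -> : (N - N.-1 - 0 = 1)%N by lia.
have A2 : T (nseq N.-1 ep ++ [:: nm]) c = cos (N.-1%:R * th) * S 1 + sin (N.-1%:R * th) * S 2.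
  rewrite -F; last lia.
  by have -> : (N - N.-1 - 1 = 0)%N by lia.
rewrite A1 A2 S0 => H.
have HS2 : sin (N.-1%:R * th) * S 2 = 0.
  have [->|hN2] : N = 1%N \/ (2 <= N)%N by lia.
    by rewrite /= mul0r sin0 mul0r.
  by rewrite -[2%N]/(0 + 2)%N S_step ?S0 ?oppr0 ?mulr0.
have HN : N%:R * th = N.-1%:R * th + th.
  by rewrite -{1}(prednK hN) -addn1 natrD mulrDl mul1r.
have : cos (N%:R * th) * S 1 = 0.
  rewrite HN cosD; rewrite -H; move: HS2; rewrite -/(S 2) => HS2.
  apply/eqP; rewrite -subr_eq0; apply/eqP.
  transitivity (- cos th * (sin (N.-1%:R * th) * S 2)); first ring.
  by rewrite HS2 mulr0.
by move/eqP; rewrite mulf_eq0 (negbTE hcos) /= => /eqP.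
Qed.

Lemma S_all k : (k <= N)%N -> S k = 0.
Proof.
suff H : forall k, (k <= N)%N -> S k = 0 /\ ((k.+1 <= N)%N -> S k.+1 = 0).
  by move=> hk; case: (H k hk).
move=> {k}; elim=> [|k IH] hk; first by split => //; rewrite ?S0 ?S1.
have [IH1 IH2] := IH (ltnW hk).
split; first by apply: IH2.
move=> hk2; rewrite -addn2 S_step ?IH1 ?oppr0 //; lia.
Qed.

Lemma all_zero w : size w = N -> c w = 0.
Proof.
move=> hw.
suff H : forall vs k j, (size vs + k + j = N)%N -> T (vs ++ nseq k nm ++ nseq j em) c = 0.
  have := H (map basis w) 0%N 0%N; rewrite /= cats0 T_basis => ->//.
  by rewrite size_map hw addn0 addn0.
elim/last_ind => [|vs v IH] k j hs.
  rewrite cat0s -(S_all k); last by move: hs => /=; lia.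
  rewrite /S; congr (T (_ ++ nseq _ _) c); move: hs => /=; lia.
have v_lin : v = ((v.1 * em.1 + v.2 * em.2) * em.1 + (v.2 * em.1 - v.1 * em.2) * nm.1,
                  (v.1 * em.1 + v.2 * em.2) * em.2 + (v.2 * em.1 - v.1 * em.2) * nm.2).
  rewrite [v in LHS]surjective_pairing /nm /=; congr (_, _).
    by rewrite -[v.1 in LHS]mulr1 -he; ring.
  by rewrite -[v.2 in LHS]mulr1 -he; ring.
rewrite size_rcons in hs.
rewrite -cats1 -catA cat1s (T_lin _ _ _ _ _ _ _ _ v_lin).
have E1 := T_move vs em (nseq k nm) (nseq j em) c hc.
rewrite E1.
rewrite -[em :: nseq j em]/(nseq j.+1 em) -[nm :: nseq k nm ++ _]/(nseq k.+1 nm ++ _).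
rewrite !IH ?mulr0 ?addr0 //; lia.
Qed.

End Core.
End Alg.

Section Trig.
Variable R : realType.

Lemma cos_zero (N : nat) (x : R) : 0 <= x < N%:R * pi -> cos x = 0 ->
  exists2 q, (q < N)%N & x = pi / 2 + q%:R * pi.
Proof.
elim: N x => [|N IH] x hx hc.
  by move: hx; rewrite mul0r; lra.
have pi0 := @pi_gt0 R.
have [xl|xg] := ltP x pi.
  exists 0%N => //; rewrite mul0r addr0.
  apply: cos_inj; rewrite ?cos_pihalf //; rewrite in_itv /=; apply/andP; split; lra.
have [q hq hq2] : exists2 q, (q < N)%N & x - pi = pi / 2 + q%:R * pi.
  apply: IH.
    have E : N.+1%:R = N%:R + 1 :> R by rewrite -addn1 natrD.
    move: hx; rewrite E; lra.
  by move: hc; rewrite -{1}(subrK pi x) cosDpi => /eqP; rewrite oppr_eq0 => /eqP.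
exists q.+1; first by [].
have -> : q.+1%:R = q%:R + 1 :> R by rewrite -addn1 natrD.
move: hq2; lra.
Qed.

Lemma cos_ne0 (n N : nat) (alpha : R) : 0 < alpha < 1 -> (1 <= N <= n - 1)%N ->
  (forall p q : nat, (1 <= p <= n - 1)%N -> (q <= p - 1)%N ->
     alpha != (2 * q + 1)%:R / (2 * p)%:R) ->
  cos (N%:R * (alpha * pi)) != 0.
Proof.
move=> ha hN hyp; apply/eqP => hc.
have pi0 := @pi_gt0 R.
have N0 : (0 < N%:R :> R) by rewrite ltr0n; lia.
have H1 : 0 <= N%:R * (alpha * pi) < N%:R * pi.
  apply/andP; split.
    by apply: mulr_ge0; [exact: ltW | apply: mulr_ge0; lra].
  rewrite ltr_pM2l // -[X in _ < X]mul1r ltr_pM2r //; lra.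
have [q hq hx] := cos_zero _ _ H1 hc.
have := hyp N q hN ltac:(lia); move=> /eqP; apply.
apply: (mulfI (x := N%:R * pi)); first by apply: lt0r_neq0; apply: mulr_gt0.
have -> : N%:R * pi * alpha = N%:R * (alpha * pi) by ring.
rewrite hx !natrD !addr0.
field; lra.
Qed.
End Trig.

Section A.
Variable R : realType.
Definition line (q e : R * R) (s : R) : R * R := (q.1 + s * e.1, q.2 + s * e.2).

Lemma line_shift q e t h : line q e (h *: (1:R) + t) = h *: e + line q e t.
Proof.
rewrite /line.
change (h *: e) with (h * e.1, h * e.2).
change ((h * e.1, h * e.2) + (q.1 + t * e.1, q.2 + t * e.2)) with (h * e.1 + (q.1 + t * e.1), h * e.2 + (q.2 + t * e.2)).
change (h *: (1:R)) with (h * 1).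
congr (_, _); ring.
Qed.

Lemma line_cvg q e t : line q e s @[s --> t] --> line q e t.
Proof.
have -> : line q e = fun s => s *: e + q.
  apply: funext => s; rewrite /line.
  change (s *: e) with (s * e.1, s * e.2).
  change ((s * e.1, s * e.2) + q) with (s * e.1 + q.1, s * e.2 + q.2).
  congr (_, _); ring.
apply: cvgD; last exact: cvg_cst.
apply: cvgZl. exact: cvg_id.
Qed.

Lemma line_derive (g : R * R -> R) q e t : differentiable g (line q e t) ->
  is_derive t 1 (fun s => g (line q e s)) ('d g (line q e t) e).
Proof.
move=> dg.
have E : (fun h : R => h^-1 *: (((fun s => g (line q e s)) \o shift t) (h *: 1) - g (line q e t)))
   = (fun h => h^-1 *: ((g \o shift (line q e t)) (h *: e) - g (line q e t))).
  by apply: funext => h /=; rewrite line_shift.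
have Hd : derivable g (line q e t) e := @diff_derivable _ _ _ g (line q e t) e dg.
split; first by rewrite /derivable E; exact: Hd.
by rewrite /derive E -/(derive g (line q e t) e) deriveE.
Qed.

Lemma dxE (g : R * R -> R) p : differentiable g p -> dx g p = 'd g p (1, 0).
Proof.
move=> dg.
have Ep : p = line (0, p.2) (1, 0) p.1.
  by rewrite /line /= [p in LHS]surjective_pairing; congr (_, _); ring.
have Ef : (fun t => g (t, p.2)) = (fun s => g (line (0, p.2) (1, 0) s)).
  by apply: funext => s; rewrite /line /=; congr g; congr (_, _); ring.
rewrite /dx derive1E Ef.
rewrite Ep in dg.
rewrite (@derive_val _ _ _ _ _ _ _ (line_derive _ _ _ _ dg)).
by rewrite -Ep.
Qed.

Lemma dyE (g : R * R -> R) p : differentiable g p -> dy g p = 'd g p (0, 1).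
Proof.
move=> dg.
have Ep : p = line (p.1, 0) (0, 1) p.2.
  by rewrite /line /= [p in LHS]surjective_pairing; congr (_, _); ring.
have Ef : (fun t => g (p.1, t)) = (fun s => g (line (p.1, 0) (0, 1) s)).
  by apply: funext => s; rewrite /line /=; congr g; congr (_, _); ring.
rewrite /dy derive1E Ef.
rewrite Ep in dg.
rewrite (@derive_val _ _ _ _ _ _ _ (line_derive _ _ _ _ dg)).
by rewrite -Ep.
Qed.

Lemma dlin (g : R * R -> R) p e : differentiable g p ->
  'd g p e = e.1 * dx g p + e.2 * dy g p.
Proof.
move=> dg; rewrite dxE // dyE //.
have He : e = e.1 *: ((1, 0) : R * R) + e.2 *: (0, 1).
  rewrite [e in LHS]surjective_pairing.
  change (e.1 *: ((1, 0) : R * R)) with (e.1 * 1, e.1 * 0).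
  change (e.2 *: ((0, 1) : R * R)) with (e.2 * 0, e.2 * 1).
  change ((e.1 * 1, e.1 * 0) + (e.2 * 0, e.2 * 1)) with (e.1 * 1 + e.2 * 0, e.1 * 0 + e.2 * 1).
  congr (_, _); ring.
rewrite {1}He linearD !linearZ /=.
by rewrite /GRing.scale /=.
Qed.

Lemma line_derive' (g : R * R -> R) q e t : differentiable g (line q e t) ->
  is_derive t 1 (fun s => g (line q e s)) (e.1 * dx g (line q e t) + e.2 * dy g (line q e t)).
Proof. by move=> dg; rewrite -dlin //; apply: line_derive. Qed.

Lemma lineX y s : line (0, y) (1, 0) s = (s, y).
Proof. by rewrite /line /=; congr (_, _); ring. Qed.
Lemma lineY x s : line (x, 0) (0, 1) s = (x, s).
Proof. by rewrite /line /=; congr (_, _); ring. Qed.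

Lemma dx_is_derive (f : R * R -> R) p : differentiable f p ->
  is_derive p.1 1 (fun t => f (t, p.2)) (dx f p).
Proof.
move=> df.
have Ep : p = line (0, p.2) (1, 0) p.1 by rewrite lineX -surjective_pairing.
have Ef : (fun t => f (t, p.2)) = (fun s => f (line (0, p.2) (1, 0) s)).
  by apply: funext => s; rewrite lineX.
have df' : differentiable f (line (0, p.2) (1, 0) p.1) by rewrite -Ep.
have Hd := line_derive _ _ _ _ df'.
rewrite -Ef -Ep in Hd.
by rewrite dxE.
Qed.

Lemma dy_is_derive (f : R * R -> R) p : differentiable f p ->
  is_derive p.2 1 (fun t => f (p.1, t)) (dy f p).
Proof.
move=> df.
have Ep : p = line (p.1, 0) (0, 1) p.2 by rewrite lineY -surjective_pairing.
have Ef : (fun t => f (p.1, t)) = (fun s => f (line (p.1, 0) (0, 1) s)).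
  by apply: funext => s; rewrite lineY.
have df' : differentiable f (line (p.1, 0) (0, 1) p.2) by rewrite -Ep.
have Hd := line_derive _ _ _ _ df'.
rewrite -Ef -Ep in Hd.
by rewrite dyE.
Qed.

Lemma dx_lin (f g : R * R -> R) a b p : differentiable f p -> differentiable g p ->
  dx (fun x => a * f x + b * g x) p = a * dx f p + b * dx g p.
Proof.
move=> df dg.
have H := is_deriveD (is_deriveZ a (dx_is_derive _ _ df)) (is_deriveZ b (dx_is_derive _ _ dg)).
rewrite /dx derive1E.
exact: (@derive_val _ _ _ _ _ _ _ H).
Qed.

Lemma dy_lin (f g : R * R -> R) a b p : differentiable f p -> differentiable g p ->
  dy (fun x => a * f x + b * g x) p = a * dy f p + b * dy g p.
Proof.
move=> df dg.
have H := is_deriveD (is_deriveZ a (dy_is_derive _ _ df)) (is_deriveZ b (dy_is_derive _ _ dg)).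
rewrite /dy derive1E.
exact: (@derive_val _ _ _ _ _ _ _ H).
Qed.

Variable Omega : set (R * R).
Hypothesis oO : open Omega.

Lemma near_line q e t : Omega (line q e t) -> \forall s \near t, Omega (line q e s).
Proof.
move=> Ot.
have HN : nbhs (line q e t) Omega by apply: open_nbhs_nbhs; split.
exact: (line_cvg q e t) _ HN.
Qed.

Lemma dx_loc (f g : R * R -> R) p : (forall x, Omega x -> f x = g x) -> Omega p ->
  dx f p = dx g p.
Proof.
move=> fg Op; rewrite /dx !derive1E; apply: near_eq_derive.
have Op' : Omega (line (0, p.2) (1, 0) p.1) by rewrite lineX -surjective_pairing.
near=> s; apply: fg; rewrite -(lineX p.2 s); near: s; exact: near_line Op'.
Unshelve. all: by end_near. Qed.

Lemma dy_loc (f g : R * R -> R) p : (forall x, Omega x -> f x = g x) -> Omega p ->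
  dy f p = dy g p.
Proof.
move=> fg Op; rewrite /dy !derive1E; apply: near_eq_derive.
have Op' : Omega (line (p.1, 0) (0, 1) p.2) by rewrite lineY -surjective_pairing.
near=> s; apply: fg; rewrite -(lineY p.1 s); near: s; exact: near_line Op'.
Unshelve. all: by end_near. Qed.

Lemma dp_loc (f g : R * R -> R) w : (forall x, Omega x -> f x = g x) ->
  forall p, Omega p -> dpartial w f p = dpartial w g p.
Proof.
move=> fg; elim: w => [|b w IH] p Op //=; first exact: fg.
by case: b; [apply: dy_loc | apply: dx_loc].
Qed.

Lemma dp_cat w1 w2 (f : R * R -> R) : dpartial (w1 ++ w2) f = dpartial w1 (dpartial w2 f).
Proof. by rewrite /dpartial foldr_cat. Qed.

Lemma smooth_dp (f : R * R -> R) w : smooth_on Omega f -> smooth_on Omega (dpartial w f).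
Proof. by move=> sf w' p Op; rewrite -dp_cat; apply: sf. Qed.

Lemma dp_lin (f g : R * R -> R) a b w : smooth_on Omega f -> smooth_on Omega g ->
  forall p, Omega p ->
  dpartial w (fun x => a * f x + b * g x) p = a * dpartial w f p + b * dpartial w g p.
Proof.
move=> sf sg; elim: w => [|c w IH] p Op //=.
case: c.
  by rewrite (dy_loc _ (fun x => a * dpartial w f x + b * dpartial w g x) p) //;
    apply: dy_lin; [apply: sf | apply: sg].
by rewrite (dx_loc _ (fun x => a * dpartial w f x + b * dpartial w g x) p) //;
  apply: dx_lin; [apply: sf | apply: sg].
Qed.


Lemma nbhs_box (p : R * R) (P : set (R * R)) : nbhs p P ->
  exists2 d : R, 0 < d & forall q : R * R, `|q.1 - p.1| < d -> `|q.2 - p.2| < d -> P q.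
Proof.
move=> /nbhs_ballP [d d0 H]; exists d => // q h1 h2; apply: H.
rewrite /ball /= /prod_ball /=; split; rewrite /ball /= distrC //.
Qed.

Lemma mvt (F dF : R -> R) (a b : R) : a <= b ->
  (forall s : R, a <= s <= b -> is_derive s 1 F (dF s)) ->
  exists2 c, a <= c <= b & F b - F a = dF c * (b - a).
Proof.
move=> ab hd.
have H1 : forall x, x \in `]a, b[%R -> is_derive x 1 F (dF x).
  move=> x; rewrite in_itv /= => /andP [h1 h2]; apply: hd.
  by rewrite !ltW.
have H2 : {within `[a, b], continuous F}.
  apply: derivable_within_continuous => x; rewrite in_itv /= => hx.
  by case: (hd x hx).
have [c hc E] := MVT_segment ab H1 H2.
by exists c => //; move: hc; rewrite in_itv.
Qed.

End A.

Lemma K_aux (R : realType) (a b c d X Y h u v u' v' : R) :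
  a - b - (c - d) = (u - v) * h -> u - v = X * h ->
  a - c - (b - d) = (u' - v') * h -> u' - v' = Y * h -> X * (h * h) = Y * (h * h).
Proof. move=> e1 e2 e3 e4; rewrite !mulrA -e2 -e4 -e1 -e3; ring. Qed.

Lemma fin_aux (R : realType) (x y z : R) : `|x - y| <= `|x - z| + `|y - z|.
Proof. rewrite (_ : x - y = (x - z) - (y - z)); [exact: ler_normB | ring]. Qed.

Lemma fin2 (R : realType) (n a b e : R) : 0 < n -> n <= a + b -> a < e -> b < e -> e * 4 = n -> False.
Proof. lra. Qed.

Section Schwarz.
Variable R : realType.
Variable Omega : set (R * R).
Hypothesis oO : open Omega.

Lemma schwarz (f : R * R -> R) p : smooth_on Omega f -> Omega p ->
  dy (dx f) p = dx (dy f) p.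
Proof.
move=> sf Op.
set A := dy (dx f); set B := dx (dy f).
have dA : forall q, Omega q -> differentiable A q := fun q hq => sf [:: true; false] q hq.
have dB : forall q, Omega q -> differentiable B q := fun q hq => sf [:: false; true] q hq.
have [r r0 Hr] := @nbhs_box R _ _ (open_nbhs_nbhs (conj oO Op)).
apply/eqP; rewrite -subr_eq0; apply/negP => /negP hne.
set eps := `|A p - B p| / 4.
have eps0 : 0 < eps by rewrite divr_gt0 // normr_gt0.
have cA := (cvgrPdist_lt _ _).1 (differentiable_continuous (dA p Op)) eps eps0.
have cB := (cvgrPdist_lt _ _).1 (differentiable_continuous (dB p Op)) eps eps0.
have [da da0 Ha] := @nbhs_box R _ _ (cA _).
have [db db0 Hb] := @nbhs_box R _ _ (cB _).
set h := Num.min r (Num.min da db) / 2.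
have hm0 : 0 < Num.min r (Num.min da db) by rewrite !lt_min r0 da0 db0.
have h0 : 0 < h by rewrite divr_gt0.
have hlt : h < Num.min r (Num.min da db) by rewrite /h; lra.
move: hlt; rewrite !lt_min => /and3P [hr hda hdb].
clearbody h.
have box : forall s t, p.1 <= s <= p.1 + h -> p.2 <= t <= p.2 + h ->
    [/\ Omega (s, t), `|A p - A (s, t)| < eps & `|B p - B (s, t)| < eps].
  move=> s t hs ht.
  have h1 : `|s - p.1| <= h by rewrite ger0_norm; lra.
  have h2 : `|t - p.2| <= h by rewrite ger0_norm; lra.
  split; [apply: Hr | apply: (Ha (s, t)) | apply: (Hb (s, t))] => /=; lra.
have inO : forall s t, p.1 <= s <= p.1 + h -> p.2 <= t <= p.2 + h -> Omega (s, t).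
  by move=> s t hs ht; case: (box s t hs ht).
have hp1 : p.1 <= p.1 <= p.1 + h by lra.
have hp1h : p.1 <= p.1 + h <= p.1 + h by lra.
have hp2 : p.2 <= p.2 <= p.2 + h by lra.
have hp2h : p.2 <= p.2 + h <= p.2 + h by lra.
have df : forall q, Omega q -> differentiable f q := fun q hq => sf [::] q hq.
have dfx : forall q, Omega q -> differentiable (dx f) q := fun q hq => sf [:: false] q hq.
have dfy : forall q, Omega q -> differentiable (dy f) q := fun q hq => sf [:: true] q hq.
have ab1 : p.1 <= p.1 + h by lra.
have ab2 : p.2 <= p.2 + h by lra.
have [xi hxi E1] := @mvt R (fun s => f (s, p.2 + h) - f (s, p.2))
   (fun s => dx f (s, p.2 + h) - dx f (s, p.2)) _ _ ab1
   (fun s hs => is_deriveB (@dx_is_derive R f (s, p.2 + h) (df _ (inO _ _ hs hp2h)))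
                          (@dx_is_derive R f (s, p.2) (df _ (inO _ _ hs hp2)))).
have [eta heta E2] := @mvt R (fun t => dx f (xi, t)) (fun t => A (xi, t)) _ _ ab2
   (fun t ht => @dy_is_derive R (dx f) (xi, t) (dfx _ (inO _ _ hxi ht))).
have [eta' heta' E3] := @mvt R (fun t => f (p.1 + h, t) - f (p.1, t))
   (fun t => dy f (p.1 + h, t) - dy f (p.1, t)) _ _ ab2
   (fun t ht => is_deriveB (@dy_is_derive R f (p.1 + h, t) (df _ (inO _ _ hp1h ht)))
                           (@dy_is_derive R f (p.1, t) (df _ (inO _ _ hp1 ht)))).
have [xi' hxi' E4] := @mvt R (fun s => dy f (s, eta')) (fun s => B (s, eta')) _ _ ab1
   (fun s hs => @dx_is_derive R (dy f) (s, eta') (dfy _ (inO _ _ hs heta'))).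
have Hh1 : p.1 + h - p.1 = h by ring.
have Hh2 : p.2 + h - p.2 = h by ring.
cbv beta in E1; cbv beta in E2; cbv beta in E3; cbv beta in E4.
rewrite Hh1 in E1 E4; rewrite Hh2 in E2 E3.
have K := @K_aux R _ _ _ _ _ _ _ _ _ _ _ E1 E2 E3 E4.
have hh : h * h != 0 by apply: mulf_neq0; apply: lt0r_neq0.
have K' := mulIf hh K.
have [_ a1 _] := box xi eta hxi heta.
have [_ _ b1] := box xi' eta' hxi' heta'.
rewrite K' in a1.
have hn := @fin_aux R (A p) (B p) (B (xi', eta')).
have hpos : 0 < `|A p - B p| by rewrite normr_gt0.
have heps : eps * 4 = `|A p - B p| by rewrite /eps mulfVK.
exact: (@fin2 R _ _ _ _ hpos hn a1 b1 heps).
Qed.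
End Schwarz.

Lemma deriv_zero_right (R : realType) (G : R -> R) (t d h : R) : t < h -> is_derive t 1 G d ->
  (forall s, t <= s < h -> G s = 0) -> d = 0.
Proof.
move=> th [Gd <-] Gz.
set q := fun x : R => x^-1 *: ((G \o shift t) (x *: 1) - G t).
have c1 : q @ 0^' --> 'D_1 G t by [].
have inc : (0:R)^'+ `=>` (0:R)^'.
  move=> P; rewrite /at_right /dnbhs /within /=; apply: filterS => x H x0.
  by apply: H; rewrite lt0r_neq0.
have c2 : q @ 0^'+ --> 'D_1 G t := cvg_trans (cvg_app _ inc) c1.
have c3 : q @ 0^'+ --> (0:R).
  apply: cvg_near_cst.
  near=> x.
  have xpos : 0 < x by near: x; exact: nbhs_right_gt.
  have xlt : x < h - t by near: x; apply: nbhs_right_lt; lra.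
  rewrite /q /= !Gz ?subrr ?scaler0 //; first lra.
  have -> : x%:A = x :> R by rewrite -[RHS]mulr1.
  lra.
exact: (cvg_unique _ c2 c3).
Unshelve. all: by end_near. Qed.

Section Main.
Variable R : realType.

Lemma T_line_gen (vs : seq (R * R)) (g : seq bool -> R * R -> R) q e t :
  (forall w, differentiable (g w) (line _ q e t)) ->
  is_derive t 1 (fun s => T _ vs (fun w => g w (line _ q e s)))
    (T _ vs (fun w => e.1 * dx (g w) (line _ q e t) + e.2 * dy (g w) (line _ q e t))).
Proof.
elim: vs g => [|v vs IH] g dg /=.
  exact: line_derive'.
have H1 := IH (fun w => g (false :: w)) (fun w => dg (false :: w)).
have H2 := IH (fun w => g (true :: w)) (fun w => dg (true :: w)).
exact: (is_deriveD (is_deriveZ v.1 H1) (is_deriveZ v.2 H2)).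
Qed.

Lemma T_line (vs : seq (R * R)) (f : R * R -> R) q e t :
  (forall w, differentiable (dpartial w f) (line _ q e t)) ->
  is_derive t 1 (fun s => T _ vs (fun w => dpartial w f (line _ q e s)))
    (T _ (e :: vs) (fun w => dpartial w f (line _ q e t))).
Proof.
move=> dg; have := T_line_gen vs (fun w => dpartial w f) q e t dg.
by rewrite T_lin_c.
Qed.

Variable Omega : set (R * R).
Hypothesis oO : open Omega.

Lemma zero_prop (f : R * R -> R) vs q e h :
  smooth_on Omega f -> (forall t, 0 <= t <= h -> Omega (line _ q e t)) ->
  (forall t, 0 <= t < h -> T _ vs (fun w => dpartial w f (line _ q e t)) = 0) ->
  forall k t, 0 <= t < h -> T _ (nseq k e ++ vs) (fun w => dpartial w f (line _ q e t)) = 0.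
Proof.
move=> sf inO H0; elim=> [|k IH] t ht //=; first exact: H0.
have Ot : Omega (line _ q e t) by apply: inO; lra.
have D := T_line (nseq k e ++ vs) f q e t (fun w => sf w _ Ot).
apply: (@deriv_zero_right R _ t _ h _ D) => [|s hs]; first lra.
apply: IH; lra.
Qed.

End Main.

Lemma swap2 (R : realType) (Omega : set (R * R)) (oO : open Omega) (g : R * R -> R) b b' :
  smooth_on Omega g -> forall x, Omega x -> dpartial [:: b; b'] g x = dpartial [:: b'; b] g x.
Proof.
move=> sg x Ox; case: b; case: b'.
- reflexivity.
- exact: (@schwarz R Omega oO g x sg Ox).
- exact: (esym (@schwarz R Omega oO g x sg Ox)).
- reflexivity.
Qed.

Lemma c_sym (R : realType) (Omega : set (R * R)) (oO : open Omega) (u : R * R -> R) x0 :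
  smooth_on Omega u -> Omega x0 -> csym R (fun w => dpartial w u x0).
Proof.
move=> su Ox p b b' w.
rewrite !dp_cat.
apply: (@dp_loc R Omega oO); last exact: Ox.
move=> x Ox'.
change (dpartial [:: b; b'] (dpartial w u) x = dpartial [:: b'; b] (dpartial w u) x).
apply: (@swap2 R Omega oO); last exact: Ox'.
exact: smooth_dp.
Qed.


Lemma harm_aux (R : realType) (Omega : set (R * R)) (oO : open Omega) (u : R * R -> R)
  (lambda : R) x0 v :
  smooth_on Omega u -> (forall p, Omega p -> - laplacian u p = lambda * u p) -> Omega x0 ->
  dpartial v u x0 = 0 ->
  dpartial (v ++ [:: false; false]) u x0 + dpartial (v ++ [:: true; true]) u x0 = 0.
Proof.
move=> su Hlap Ox0 Hz.
have s1 := @smooth_dp R Omega u [:: false; false] su.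
have s2 := @smooth_dp R Omega u [:: true; true] su.
have E1 := @dp_lin R Omega oO _ _ 1 1 v s1 s2 x0 Ox0.
have HH : forall x, Omega x -> 1 * dpartial [:: false; false] u x + 1 * dpartial [:: true; true] u x
    = (- lambda) * u x + 0 * u x.
  move=> x Ox; have E := Hlap x Ox; rewrite /laplacian in E.
  change (1 * dx (dx u) x + 1 * dy (dy u) x = - lambda * u x + 0 * u x).
  move: E; generalize (dx (dx u) x) (dy (dy u) x) (u x) => a b c E.
  by rewrite !mul1r mul0r addr0 mulNr -E opprK.
have E2 := @dp_loc R Omega oO _ _ v HH x0 Ox0.
have E3 := @dp_lin R Omega oO u u (- lambda) 0 v su su x0 Ox0.
have E4 := etrans (esym E1) (etrans E2 E3).
rewrite !dp_cat.
move: E4 Hz.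
generalize (dpartial v (dpartial [:: false; false] u) x0) (dpartial v (dpartial [:: true; true] u) x0)
  (dpartial v u x0).
move=> a b c E4 Hz.
by move: E4; rewrite Hz !mul1r !mulr0 addr0.
Qed.

Theorem theorem3p7 (R : realType) (Omega : set (R * R)) (lambda : R)
  (u : R * R -> R) (x0 em : R * R) (h alpha : R) (n : nat) :
  open Omega ->
  0 < lambda ->
  (* u in L^2(Omega) *)
  measurable Omega ->
  measurable_fun Omega u ->
  (@lebesgue_measure R \x @lebesgue_measure R)%E.-integrable Omega
     (fun p => (u p ^+ 2)%:E) ->
  (* u is real-analytic (hence smooth) in Omega *)
  real_analytic_on Omega u ->
  smooth_on Omega u ->
  (* -Delta u = lambda u in Omega *)
  (forall p, Omega p -> - laplacian u p = lambda * u p) ->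
  Omega x0 -> 0 < h -> 0 < alpha < 1 ->
  em.1 ^+ 2 + em.2 ^+ 2 = 1 ->
  let ep := rotate (alpha * pi) em in
  segment x0 em h `<=` Omega ->
  segment x0 ep h `<=` Omega ->
  (* Gamma^+ is a singular line: normal derivative vanishes,
     with unit normal nu = (- ep.2, ep.1) *)
  (forall p, segment x0 ep h p -> - ep.2 * dx u p + ep.1 * dy u p = 0) ->
  (* Gamma^- is a nodal line *)
  (forall p, segment x0 em h p -> u p = 0) ->
  (2 <= n)%N ->
  (forall p q : nat, (1 <= p <= n - 1)%N -> (q <= p - 1)%N ->
     alpha != (2 * q + 1)%:R / (2 * p)%:R) ->
  vanishes_up_to_order u n x0.
Proof.
move=> oO lam0 _ _ _ _ su Hlap Ox0 h0 ha he ep segm segp Hsing Hnod n2 hyp.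
set c := fun w => dpartial w u x0.
have segE : forall e t, 0 <= t <= h -> segment x0 e h (line R x0 e t).
  by move=> e t ht; exists t.
have line0 : forall e, line R x0 e 0 = x0.
  by move=> e; rewrite /line !mul0r !addr0 -surjective_pairing.
have ZN : forall k, T R (nseq k em) c = 0.
  have H0 : forall t, 0 <= t < h -> T R [::] (fun w => dpartial w u (line R x0 em t)) = 0.
    move=> t ht; apply: Hnod; apply: segE; lra.
  move=> k; have := @zero_prop R Omega u [::] x0 em h su
    (fun t ht => segm _ (segE em t ht)) H0 k 0 ltac:(lra).
  by rewrite cats0 line0.
have ZS : forall k, T R (nseq k ep ++ [:: (- ep.2, ep.1)]) c = 0.
  have H0 : forall t, 0 <= t < h -> T R [:: (- ep.2, ep.1)] (fun w => dpartial w u (line R x0 ep t)) = 0.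
    move=> t ht; have := Hsing _ (segE ep t ltac:(lra)).
    move=> H; exact: H.
  move=> k; have := @zero_prop R Omega u [:: (- ep.2, ep.1)] x0 ep h su
    (fun t ht => segp _ (segE ep t ht)) H0 k 0 ltac:(lra).
  by rewrite line0.
move=> w hw.
suff : forall N, (N < n)%N -> forall w, size w = N -> c w = 0.
  by move=> H; exact: (H (size w) hw w erefl).
elim/ltn_ind => N IH hN {}w {}hw.
case: N IH hN hw => [|N] IH hN hw.
  case: w hw => [_|] //.
  rewrite /c -(line0 em); apply: Hnod; apply: segE; lra.
apply: (@all_zero R c N.+1 em (alpha * pi)).
- exact: (@c_sym R Omega oO u x0 su Ox0).
- by [].
- exact: he.
- move=> v h2 hv.
  apply: (@harm_aux R Omega oO u lambda x0 v su Hlap Ox0).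
  apply: (IH (N.+1 - 2)%N); [lia | lia | exact: hv].
- exact: ZN.
- exact: ZS.
- apply: (@cos_ne0 R n) => //; lia.
- exact: hw.
Qed.
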